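(* Let $m\ge 2$, $k\in\mathbb N_0$, $0\le s\le m$ with $s+k\ge 1$. Then $$\mathcal{P}_k^s=\mathrm{Ker}_k^s\partial^+\oplus(\mathbf{x}\bullet)\,\mathrm{Ker}_{k-1}^{s+1}\partial^+,$$ and the projection of $\mathcal{P}_k^s$ onto $\mathrm{Ker}_k^s\partial^+$ along this decomposition is $P^+=-(s+k)^{-1}\partial^+(\mathbf{x}\bullet)$.
   Context: $\mathcal{C}\ell_m$ denotes either the real Clifford algebra $\mathbb{R}_{0,m}$ or the complex Clifford algebra $\mathbb{C}_m$ generated by the standard basis $e_1,\dots,e_m$ of $\mathbb{R}^m$ with relations $e_ie_j+e_je_i=-2\delta_{ij}$; $\mathcal{C}\ell_m=\bigoplus_{s=0}^m\mathcal{C}\ell_m^s$, where $\mathcal{C}\ell_m^s$ is the space of $s$-vectors. A point $\mathbf{x}\in\mathbb R^m$ is identified with the 1-vector $\sum_j x_je_j$. For a 1-vector $u$ and an $s$-vector $v$, $u\bullet v=\frac12(uv-(-1)^svu)$ and $u\wedge v=\frac12(uv+(-1)^svu)$, extended linearly in $v$; $(\mathbf{x}\bullet)$ is the pointwise operator $P\mapsto\mathbf x\bullet P$. $\mathcal P_k^s$ is the space of $k$-homogeneous $\mathcal C\ell_m^s$-valued polynomials on $\mathbb R^m$ (zero if $k<0$ or $s>m$). $\partial^+P=\sum_je_j\wedge\partial_{x_j}P$ and $\mathrm{Ker}_k^s\partial^+=\{P\in\mathcal P_k^s:\partial^+P=0\}$. *)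

(* Defs.v *)
From HB Require Import structures.
From mathcomp Require Import all_boot all_order all_algebra.
Set Implicit Arguments. Unset Strict Implicit. Unset Printing Implicit Defensive.
Import Order.TTheory GRing.Theory Num.Theory.
Local Open Scope ring_scope.

Section Clifford.
Variable F : numFieldType.
Variable m : nat.

(* Clifford algebra Cl_m over F (F = R gives R_{0,m}, F = C gives C_m):
   an element is its coordinate vector on the basis blades e_A, A ⊆ {0..m-1},
   e_A = e_{a1} ... e_{ap} with a1 < ... < ap. *)
Definition Cl := {ffun {set 'I_m} -> F}.

Definition cscale (c : F) (v : Cl) : Cl := [ffun A => c * v A].

(* sign in e_A e_B = csign A B e_{A Δ B}, using e_i e_j = - e_j e_i (i<>j)
   and e_i^2 = -1 *)
Definition csign (A B : {set 'I_m}) : F :=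
  (-1) ^+ (#|[set p : 'I_m * 'I_m | (p.1 \in A) && (p.2 \in B) && (p.2 < p.1)%N]|
           + #|A :&: B|)%N.

Definition cmul (u v : Cl) : Cl :=
  [ffun C => \sum_(A : {set 'I_m}) \sum_(B : {set 'I_m} | (A :\: B) :|: (B :\: A) == C)
               csign A B * u A * v B].

Definition grade (s : nat) (v : Cl) : Cl := [ffun A : {set 'I_m} => if #|A| == s then v A else 0].

Definition vec1 (j : 'I_m) : Cl := [ffun A : {set 'I_m} => if A == [set j] then 1 else 0].

(* u • v and u ∧ v for a 1-vector u, extended linearly in v over the grades *)
Definition cdot (u v : Cl) : Cl :=
  \sum_(s < m.+1) cscale (2%:R^-1)
     (cmul u (grade s v) - cscale ((-1) ^+ s) (cmul (grade s v) u)).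
Definition cwedge (u v : Cl) : Cl :=
  \sum_(s < m.+1) cscale (2%:R^-1)
     (cmul u (grade s v) + cscale ((-1) ^+ s) (cmul (grade s v) u)).

(* Cl_m-valued polynomials in x_1..x_m: coefficient of the monomial x^alpha *)
Definition midx := {ffun 'I_m -> nat}.
Definition Pol := midx -> Cl.

Definition deg (a : midx) : nat := (\sum_(i < m) a i)%N.
Definition incr (a : midx) (j : 'I_m) : midx := [ffun i => a i + (i == j)]%N.
Definition decr (a : midx) (j : 'I_m) : midx := [ffun i => a i - (i == j)]%N.

Definition padd (P Q : Pol) : Pol := fun a => P a + Q a.
Definition psub (P Q : Pol) : Pol := fun a => P a - Q a.
Definition pscale (c : F) (P : Pol) : Pol := fun a => cscale c (P a).

(* P in P_k^s (k may be negative, then P = 0) *)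
Definition inP (k : int) (s : nat) (P : Pol) : Prop :=
  (forall a, (deg a)%:Z <> k -> P a = 0) /\
  (forall a (A : {set 'I_m}), #|A| <> s -> P a A = 0).

(* (x •) P = sum_j x_j (e_j • P) *)
Definition xdot (P : Pol) : Pol :=
  fun a => \sum_(j < m) (if (0 < a j)%N then cdot (vec1 j) (P (decr a j)) else 0).

Definition pderiv (j : 'I_m) (P : Pol) : Pol :=
  fun a => cscale ((a j).+1)%:R (P (incr a j)).
Definition dplus (P : Pol) : Pol :=
  fun a => \sum_(j < m) cwedge (vec1 j) (pderiv j P a).

Definition inKer (k : int) (s : nat) (P : Pol) : Prop :=
  inP k s P /\ dplus P = (fun _ => 0).

Definition Pplus (s k : nat) (P : Pol) : Pol :=
  pscale (- ((s + k)%:R)^-1) (dplus (xdot P)).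

End Clifford.

(* Main.v *)
Require Import Defs.
From HB Require Import structures.
From mathcomp Require Import all_boot all_order all_algebra.
From Stdlib Require Import FunctionalExtensionality.
Set Implicit Arguments. Unset Strict Implicit. Unset Printing Implicit Defensive.
Import Order.TTheory GRing.Theory Num.Theory.
Local Open Scope ring_scope.

Section Cliff.
Variable F : numFieldType.
Variable m : nat.
Implicit Types (v u : Cl F m) (C B : {set 'I_m}) (i j : 'I_m).

Definition cnt j C : nat := #|[set b in C | (b < j)%N]|.
Definition cntg j C : nat := #|[set b in C | (j < b)%N]|.
Definition sig j C : F := (-1) ^+ cnt j C.

Definition iota j v : Cl F m :=
  [ffun C : {set 'I_m} => if j \in C then 0 else - (sig j C * v (j |: C))].
Definition eps j v : Cl F m :=
  [ffun C : {set 'I_m} => if j \in C then sig j C * v (C :\ j) else 0].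

Lemma cnt_U1 i j C : i \notin C -> cnt j (i |: C) = (cnt j C + (i < j))%N.
Proof.
move=> iC; rewrite /cnt.
have -> : [set b in i |: C | (b < j)%N] =
  if (i < j)%N then i |: [set b in C | (b < j)%N] else [set b in C | (b < j)%N].
  apply/setP=> x; case: ifP=> h; rewrite !inE;
  case: (eqVneq x i) => [->|] //=; rewrite ?h ?andbF //.
case: ifP=> h; last by rewrite addn0.
by rewrite cardsU1 inE (negbTE iC) addnC.
Qed.

Lemma cnt_D1 i j C : i \in C -> cnt j C = (cnt j (C :\ i) + (i < j))%N.
Proof. by move=> iC; rewrite -cnt_U1 ?setD1K // !inE eqxx. Qed.

Lemma sgnD (a b : nat) : (-1) ^+ (a + b)%N = (-1) ^+ a * (-1) ^+ b :> F.
Proof. by rewrite exprD. Qed.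

Lemma sgnK (a : nat) : (-1) ^+ a * (-1) ^+ a = 1 :> F.
Proof. by rewrite -expr2 sqrr_sign. Qed.

Lemma sig_U1 i j C : i \notin C -> sig j (i |: C) = sig j C * (-1) ^+ (i < j)%N.
Proof. by move=> h; rewrite /sig cnt_U1 // sgnD. Qed.
Lemma sig_D1 i j C : i \in C -> sig j (C :\ i) = sig j C * (-1) ^+ (i < j)%N.
Proof.
move=> h; rewrite /sig (cnt_D1 j h) sgnD -mulrA sgnK mulr1 //.
Qed.

Lemma sig_jj j C : sig j (C :\ j) = sig j C.
Proof.
case: (boolP (j \in C)) => h; first by rewrite sig_D1 // ltnn mulr1.
by congr sig; apply/setP=> x; rewrite !inE; case: (eqVneq x j) => [->|] //=; rewrite (negbTE h).
Qed.

Lemma sign_swap i j : i != j ->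
  (-1) ^+ (i < j)%N = - (-1) ^+ (j < i)%N :> F.
Proof.
move=> ne; case: (ltngtP i j) => h //=; rewrite ?expr0 ?expr1 ?opprK //.
by move: ne; rewrite -(inj_eq val_inj) /= h eqxx.
Qed.

Lemma eps_eps i j v : eps i (eps j v) = - eps j (eps i v).
Proof.
apply/ffunP=> C; rewrite !ffunE.
case: (eqVneq i j) => [->|ne].
  by rewrite !inE eqxx /= mulr0 if_same oppr0.
rewrite !inE (eq_sym j i) (negbTE ne) /=.
case: (boolP (i \in C)) => hi; case: (boolP (j \in C)) => hj //=; rewrite ?oppr0 //.
rewrite !sig_D1 // (sign_swap ne).
have -> : C :\ j :\ i = C :\ i :\ j.
  by apply/setP=> x; rewrite !inE; case: (x == i); case: (x == j); rewrite ?andbF.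
  rewrite ?mulNr ?mulrN ?mulNr ?mulrN !mulrA [sig i C * _]mulrC //.
by rewrite mulr0.
by rewrite mulr0 oppr0.
Qed.

Lemma eps_iota i j v : i != j -> eps i (iota j v) = - iota j (eps i v).
Proof.
move=> ne; apply/ffunP=> C; rewrite !ffunE.
case: (boolP (i \in C)) => hi; case: (boolP (j \in C)) => hj; rewrite ?oppr0 //.
- by rewrite !inE hj andbT (eq_sym j i) ne /= mulr0.
- rewrite !inE (negbTE hj) andbF /= hi orbT.
  rewrite sig_D1 // sig_U1 // (sign_swap ne).
  have -> : j |: C :\ i = (j |: C) :\ i.
    apply/setP=> x; rewrite !inE; case: (eqVneq x i) => [->|]; rewrite ?(negbTE ne) //=.
  by rewrite ?mulNr ?mulrN ?mulNr ?mulrN ?opprK !mulrA [sig i C * _]mulrC.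
- by rewrite !inE (negbTE hi) orbF (negbTE ne) mulr0 !oppr0.
Qed.

Lemma eps_iota_jj j v : eps j (iota j v) + iota j (eps j v) = - v.
Proof.
apply/ffunP=> C; rewrite !ffunE.
case: (boolP (j \in C)) => hj; rewrite !inE ?eqxx /=.
  rewrite sig_jj setD1K // mulrN mulrA sgnK mul1r addr0 //.
rewrite sig_U1 // ltnn expr0 mulr1 setU1K // mulrA sgnK mul1r add0r //.
Qed.

Lemma eps_iota_sum v C : (\sum_j eps j (iota j v)) C = - (#|C|%:R * v C).
Proof.
rewrite sum_ffunE.
transitivity (\sum_j if j \in C then - v C else 0).
  apply: eq_bigr=> j _; rewrite !ffunE; case: ifP=> // h.
  by rewrite !inE eqxx /= sig_jj setD1K // mulrN mulrA sgnK mul1r.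
by rewrite -big_mkcond /= sumrN sumr_const mulr_natl.
Qed.


Definition symd j X : {set 'I_m} := ([set j] :\: X) :|: (X :\: [set j]).

Lemma symdE j X : symd j X = if j \in X then X :\ j else j |: X.
Proof.
apply/setP=> x; rewrite /symd; case: ifP=> h; rewrite !inE;
  case: (eqVneq x j) => [->|] //=; rewrite ?h ?andbF ?andbT ?orbF //.
Qed.

Lemma symd_eq j X C : (symd j X == C) = (X == symd j C).
Proof.
apply/eqP/eqP=> [<-|->]; apply/setP=> x; rewrite /symd !inE;
  case: (x == j); case: (x \in X); case: (x \in C) => //.
Qed.

Lemma csign_1l j B : csign F [set j] B = (-1) ^+ (cnt j B + (j \in B))%N.
Proof.
rewrite /csign /cnt; congr (_ ^+ (_ + _)).
  rewrite -[RHS](card_imset _ (fun x y (h : (j, x) = (j, y)) => congr1 snd h)).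
  apply: eq_card => -[x y]; rewrite !inE /=.
  apply/idP/imsetP.
    case/andP=> [/andP[/eqP -> yB] lt]; exists y; rewrite ?inE ?yB ?lt //.
  by case=> b; rewrite inE => /andP[bB blt] [-> ->]; rewrite eqxx bB blt.
case: (boolP (j \in B)) => h.
  by rewrite (setIidPl _) ?cards1 // sub1set.
rewrite (_ : _ :&: _ = set0) ?cards0 //; apply/setP=> x; rewrite !inE.
by case: (eqVneq x j) => [->|] //=; rewrite (negbTE h).
Qed.

Lemma csign_1r j B : csign F B [set j] = (-1) ^+ (cntg j B + (j \in B))%N.
Proof.
rewrite /csign /cntg; congr (_ ^+ (_ + _)).
  rewrite -[RHS](card_imset _ (fun x y (h : (x, j) = (y, j)) => congr1 fst h)).
  apply: eq_card => -[x y]; rewrite !inE /=.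
  apply/idP/imsetP.
    case/andP=> [/andP[xB /eqP ->] lt]; exists x; rewrite ?inE ?xB ?lt //.
  by case=> b; rewrite inE => /andP[bB blt] [-> ->]; rewrite eqxx bB blt.
case: (boolP (j \in B)) => h.
  by rewrite setIC (setIidPl _) ?cards1 // sub1set.
rewrite (_ : _ :&: _ = set0) ?cards0 //; apply/setP=> x; rewrite !inE.
by case: (eqVneq x j) => [->|] /=; rewrite ?(negbTE h) ?andbF.
Qed.

Lemma card_split j B : #|B| = (cnt j B + cntg j B + (j \in B))%N.
Proof.
rewrite -(cardsID [set b : 'I_m | (b < j)%N] B).
rewrite -(cardsID [set b : 'I_m | (j < b)%N] (B :\: _)) addnA; congr (_ + _ + _).
- by apply: eq_card => x; rewrite !inE.
- rewrite /cntg; apply: eq_card => x; rewrite !inE; case: (ltngtP x j) => //= _; rewrite ?andbT ?andbF //.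
case: (boolP (j \in B)) => h.
  transitivity #|[set j]|; last by rewrite cards1.
  apply: eq_card => x; rewrite !inE.
  case: (eqVneq x j) => [->|ne]; first by rewrite ltnn h.
  case: (ltngtP x j) => //= e; by move: ne; rewrite -(inj_eq val_inj) /= e eqxx.
transitivity #|(set0 : {set 'I_m})|; last by rewrite cards0.
apply: eq_card => x; rewrite !inE.
case: (ltngtP x j) => //= e; apply/negbTE; by rewrite (_ : x = j) //; apply: val_inj.
Qed.

Lemma cmul_vec1l j u :
  cmul (vec1 F j) u = [ffun C => csign F [set j] (symd j C) * u (symd j C)].
Proof.
apply/ffunP=> C; rewrite !ffunE (bigD1 [set j]) //= [X in _ + X]big1 ?addr0.
  rewrite (big_pred1 (symd j C)); first by rewrite ffunE eqxx mulr1.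
  by move=> B /=; rewrite -/(symd j B) symd_eq.
move=> A hA; apply: big1=> B _; by rewrite ffunE (negbTE hA) mulr0 mul0r.
Qed.

Lemma cmul_vec1r j u :
  cmul u (vec1 F j) = [ffun C => csign F (symd j C) [set j] * u (symd j C)].
Proof.
apply/ffunP=> C; rewrite !ffunE.
transitivity (\sum_(A | symd j A == C) csign F A [set j] * u A).
  rewrite [RHS]big_mkcond; apply: eq_bigr=> A _.
  rewrite big_mkcond (bigD1 [set j]) //= [X in _ + X]big1 ?addr0; last first.
    by move=> B hB; rewrite ffunE (negbTE hB) mulr0 if_same.
  by rewrite ffunE eqxx mulr1 /symd setUC.
rewrite (big_pred1 (symd j C)) // => A /=; by rewrite symd_eq.
Qed.


Lemma half_double (X : F) : 2%:R^-1 * (X + X) = X.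
Proof. by rewrite -mulr2n -(mulr_natl X 2) mulrA mulVf ?mul1r // pnatr_eq0. Qed.

Lemma sgn_cancel (c g : nat) (x : F) :
  (-1) ^+ (c + g)%N * ((-1) ^+ g * x) = (-1) ^+ c * x.
Proof.
rewrite mulrA -exprD -addnA addnn -muln2 exprD exprM sqrr_sign ?expr1n mulr1 //.
Qed.

Lemma card_lt j B : (#|B| < m.+1)%N.
Proof. by rewrite ltnS -[X in (_ <= X)%N](card_ord m) max_card. Qed.

Lemma cdotE j v : cdot (vec1 F j) v = iota j v.
Proof.
apply/ffunP=> C; rewrite /cdot sum_ffunE.
set B := symd j C.
transitivity (\sum_(s < m.+1 | s == #|B| :> nat) 2%:R^-1 *
   (csign F [set j] B * v B - (-1) ^+ #|B| * (csign F B [set j] * v B))).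
  rewrite [RHS]big_mkcond; apply: eq_bigr => s _.
  rewrite cmul_vec1l cmul_vec1r !ffunE -/B.
  case: (eqVneq (s : nat) #|B|) => [e|ne]; first by rewrite e.
  by rewrite ?eq_sym ?(negbTE ne) !mulr0 ?subrr ?mulr0.
rewrite (big_pred1 (Ordinal (card_lt j B))); last by move=> s /=; rewrite -val_eqE.
rewrite csign_1l csign_1r (card_split j B) ffunE /B symdE.
case: (boolP (j \in C)) => h.
  by rewrite setD11 !addn0 sgn_cancel subrr mulr0.
rewrite setU11 -addnA sgn_cancel addn1 exprS mulN1r mulNr -opprD mulrN half_double.
by rewrite /sig cnt_U1 // ltnn addn0.
Qed.

Lemma cwedgeE j v : cwedge (vec1 F j) v = eps j v.
Proof.
apply/ffunP=> C; rewrite /cwedge sum_ffunE.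
set B := symd j C.
transitivity (\sum_(s < m.+1 | s == #|B| :> nat) 2%:R^-1 *
   (csign F [set j] B * v B + (-1) ^+ #|B| * (csign F B [set j] * v B))).
  rewrite [RHS]big_mkcond; apply: eq_bigr => s _.
  rewrite cmul_vec1l cmul_vec1r !ffunE -/B.
  case: (eqVneq (s : nat) #|B|) => [e|ne]; first by rewrite e.
  by rewrite ?eq_sym ?(negbTE ne) !mulr0 ?addr0 ?mulr0.
rewrite (big_pred1 (Ordinal (card_lt j B))); last by move=> s /=; rewrite -val_eqE.
rewrite csign_1l csign_1r (card_split j B) ffunE /B symdE.
case: (boolP (j \in C)) => h.
  rewrite setD11 !addn0 sgn_cancel half_double /sig.
  by rewrite [in RHS](cnt_D1 j h) ltnn addn0.
rewrite setU11 -addnA sgn_cancel exprD expr1 mulrN1 mulNr addNr mulr0 //.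
Qed.

End Cliff.

Section Lin.
Variable F : numFieldType.
Variable m : nat.
Implicit Types (v u : Cl F m) (j : 'I_m) (c d : F).

Lemma cscale0v c : cscale c (0 : Cl F m) = 0.
Proof. by apply/ffunP=> C; rewrite !ffunE mulr0. Qed.
Lemma cscale1 v : cscale 1 v = v.
Proof. by apply/ffunP=> C; rewrite !ffunE mul1r. Qed.
Lemma cscale0 v : cscale 0 v = 0.
Proof. by apply/ffunP=> C; rewrite !ffunE mul0r. Qed.
Lemma cscaleA c d v : cscale c (cscale d v) = cscale (c * d) v.
Proof. by apply/ffunP=> C; rewrite !ffunE mulrA. Qed.
Lemma cscaleDl c d v : cscale (c + d) v = cscale c v + cscale d v.
Proof. by apply/ffunP=> C; rewrite !ffunE mulrDl. Qed.
Lemma cscaleDr c u v : cscale c (u + v) = cscale c u + cscale c v.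
Proof. by apply/ffunP=> C; rewrite !ffunE mulrDr. Qed.
Lemma cscaleN c v : cscale c (- v) = - cscale c v.
Proof. by apply/ffunP=> C; rewrite !ffunE mulrN. Qed.
Lemma cscaleNl c v : cscale (- c) v = - cscale c v.
Proof. by apply/ffunP=> C; rewrite !ffunE mulNr. Qed.
Lemma cscale_sum c (I : finType) (f : I -> Cl F m) :
  cscale c (\sum_i f i) = \sum_i cscale c (f i).
Proof. exact: (big_morph _ (cscaleDr c) (cscale0v c)). Qed.

Lemma eps0 j : eps j (0 : Cl F m) = 0.
Proof. by apply/ffunP=> C; rewrite !ffunE mulr0 if_same. Qed.
Lemma epsD j u v : eps j (u + v) = eps j u + eps j v.
Proof. by apply/ffunP=> C; rewrite !ffunE; case: ifP; rewrite ?mulrDr ?addr0. Qed.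
Lemma epsZ j c v : eps j (cscale c v) = cscale c (eps j v).
Proof. by apply/ffunP=> C; rewrite !ffunE; case: ifP=> _; [rewrite mulrCA | rewrite mulr0]. Qed.
Lemma eps_sum j (I : finType) (f : I -> Cl F m) :
  eps j (\sum_i f i) = \sum_i eps j (f i).
Proof. exact: (big_morph _ (epsD j) (eps0 j)). Qed.
Lemma eps_if j (b : bool) v : eps j (if b then v else 0) = if b then eps j v else 0.
Proof. by case: b; rewrite ?eps0. Qed.

Lemma iota0 j : iota j (0 : Cl F m) = 0.
Proof. by apply/ffunP=> C; rewrite !ffunE mulr0 oppr0 if_same. Qed.
Lemma iotaD j u v : iota j (u + v) = iota j u + iota j v.
Proof. by apply/ffunP=> C; rewrite !ffunE; case: ifP; rewrite ?mulrDr ?opprD ?addr0. Qed.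
Lemma iotaZ j c v : iota j (cscale c v) = cscale c (iota j v).
Proof. by apply/ffunP=> C; rewrite !ffunE; case: ifP=> _; [rewrite mulr0 | rewrite mulrCA mulrN]. Qed.
Lemma iota_sum j (I : finType) (f : I -> Cl F m) :
  iota j (\sum_i f i) = \sum_i iota j (f i).
Proof. exact: (big_morph _ (iotaD j) (iota0 j)). Qed.

Lemma cl_selfneg v : v = - v -> v = 0.
Proof.
move=> H; apply/ffunP=> C; move/(congr1 (fun f : Cl F m => f C)): H.
rewrite !ffunE => /eqP; rewrite -subr_eq0 opprK -mulr2n mulrn_eq0 /=.
by move/eqP.
Qed.

Lemma sum_antisym (f : 'I_m -> 'I_m -> Cl F m) :
  (forall i j, f i j = - f j i) -> \sum_i \sum_j f i j = 0.
Proof.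
move=> H; apply: cl_selfneg.
rewrite [LHS]exchange_big /= -sumrN; apply: eq_bigr=> i _.
rewrite -sumrN; apply: eq_bigr=> j _; exact: H.
Qed.

End Lin.

Section PolyS.
Variable F : numFieldType.
Variable m : nat.
Implicit Types (P : Pol F m) (a : midx m) (i j : 'I_m).

Lemma xdotE P a :
  xdot P a = \sum_j (if (0 < a j)%N then iota j (P (decr a j)) else 0).
Proof. by apply: eq_bigr => j _; rewrite cdotE. Qed.

Lemma dplusE P a :
  dplus P a = \sum_j eps j (cscale ((a j).+1)%:R (P (incr a j))).
Proof. by apply: eq_bigr => j _; rewrite cwedgeE. Qed.

Lemma incr_incr a i j : incr (incr a j) i = incr (incr a i) j.
Proof. by apply/ffunP=> x; rewrite !ffunE addnAC. Qed.
Lemma decr_incr a j : decr (incr a j) j = a.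
Proof. by apply/ffunP=> x; rewrite !ffunE addnK. Qed.
Lemma incr_decr a j : (0 < a j)%N -> incr (decr a j) j = a.
Proof.
move=> h; apply/ffunP=> x; rewrite !ffunE.
by case: (eqVneq x j) => [->|_]; rewrite ?subn0 ?addn0 // subnK.
Qed.
Lemma decr_incr_ne a i j : i != j -> decr (incr a j) i = incr (decr a i) j.
Proof.
move=> ne; apply/ffunP=> x; rewrite !ffunE.
case: (eqVneq x j) => [->|_]; first by rewrite eq_sym (negbTE ne) !subn0.
by rewrite !addn0.
Qed.

Lemma dplus_dplus P a : dplus (dplus P) a = 0.
Proof.
rewrite (dplusE (dplus P) a).
transitivity (\sum_j \sum_i cscale ((a j).+1 * ((incr a j) i).+1)%:R
   (eps j (eps i (P (incr (incr a j) i))))).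
  apply: eq_bigr => j _; rewrite dplusE cscale_sum eps_sum; apply: eq_bigr => i _.
  by rewrite !epsZ cscaleA natrM.
apply: sum_antisym => j i.
rewrite eps_eps cscaleN incr_incr; congr (- cscale _ _); congr (_%:R).
rewrite !ffunE; case: (eqVneq i j) => [->|ne] //.
by rewrite !addn0 mulnC.
Qed.

Lemma dx_xd P a : dplus (xdot P) a + xdot (dplus P) a =
  \sum_j (eps j (iota j (P a)) - cscale (a j)%:R (P a)).
Proof.
rewrite (dplusE (xdot P) a) (xdotE (dplus P) a).
transitivity (\sum_j \sum_i
  ((if (0 < (incr a j) i)%N then cscale ((a j).+1)%:R
        (eps j (iota i (P (decr (incr a j) i)))) else 0) +
   (if (0 < a i)%N then cscale (((decr a i) j).+1)%:R
        (iota i (eps j (P (incr (decr a i) j)))) else 0))).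
  symmetry; under eq_bigr do rewrite big_split; rewrite big_split /=; congr (_ + _).
    apply: eq_bigr => j _; rewrite xdotE cscale_sum eps_sum; apply: eq_bigr => i _.
    by case: ifP=> _; [rewrite epsZ | rewrite cscale0v eps0].
  rewrite exchange_big /=; apply: eq_bigr => i _.
  case: ifP => h; last by rewrite big1.
  rewrite dplusE iota_sum; apply: eq_bigr => j _; by rewrite epsZ iotaZ.
apply: eq_bigr => j _.
rewrite (bigD1 j) //= big1 ?addr0.
  rewrite ffunE eqxx addn1 /= decr_incr mulrS cscaleDl cscale1.
  case: (posnP (a j)) => h.
    by rewrite h mulr0n !cscale0 !addr0 subr0.
  rewrite ffunE eqxx subn1 prednK // incr_decr //.
  rewrite -addrA -cscaleDr addrC eps_iota_jj cscaleN.
  by rewrite addrC.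
move=> i ne; rewrite !ffunE (negbTE ne) eq_sym (negbTE ne) addn0 subn0.
rewrite decr_incr_ne //.
case: ifP => _; last by rewrite addr0.
by rewrite eps_iota 1?eq_sym // cscaleN addNr.
Qed.

Lemma dx_xd_coord P a C : (dplus (xdot P) a + xdot (dplus P) a) C =
  - ((deg a + #|C|)%:R * P a C).
Proof.
rewrite dx_xd sumrB.
have -> : forall u v : Cl F m, (u - v) C = u C - v C by move=> u v; rewrite !ffunE.
rewrite eps_iota_sum sum_ffunE.
under eq_bigr do rewrite ffunE.
rewrite -mulr_suml -natr_sum natrD mulrDl opprD addrC.
by [].
Qed.

End PolyS.

Section Grades.
Variable F : numFieldType.
Variable m : nat.
Implicit Types (P : Pol F m) (a : midx m) (i j : 'I_m) (v : Cl F m).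

Lemma zeroE (A : {set 'I_m}) : (0 : Cl F m) A = 0.
Proof. by rewrite ffunE. Qed.

Lemma iota_gr j v n : (forall A : {set 'I_m}, #|A| <> n -> v A = 0) ->
  forall A : {set 'I_m}, (#|A|).+1 <> n -> iota j v A = 0.
Proof.
move=> H A hA; rewrite ffunE; case: ifP => // h.
by rewrite H ?mulr0 ?oppr0 // cardsU1 h.
Qed.

Lemma eps_gr j v n : (forall A : {set 'I_m}, (#|A|).+1 <> n -> v A = 0) ->
  forall A : {set 'I_m}, #|A| <> n -> eps j v A = 0.
Proof.
move=> H A hA; rewrite ffunE; case: ifP => // h.
by rewrite H ?mulr0 // => e; apply: hA; rewrite (cardsD1 j A) h.
Qed.

Lemma xdot_gr P n : (forall b (A : {set 'I_m}), #|A| <> n -> P b A = 0) ->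
  forall a (A : {set 'I_m}), (#|A|).+1 <> n -> xdot P a A = 0.
Proof.
move=> H a A hA; rewrite xdotE sum_ffunE big1 // => j _.
case: ifP => _; last by rewrite zeroE.
by apply: iota_gr hA => B; apply: H.
Qed.

Lemma dplus_gr P n : (forall b (A : {set 'I_m}), (#|A|).+1 <> n -> P b A = 0) ->
  forall a (A : {set 'I_m}), #|A| <> n -> dplus P a A = 0.
Proof.
move=> H a A hA; rewrite dplusE sum_ffunE big1 // => j _.
apply: eps_gr hA => B hB; by rewrite ffunE H ?mulr0.
Qed.

Lemma deg_incr a j : deg (incr a j) = (deg a).+1.
Proof.
rewrite /deg (eq_bigr _ (fun i _ => ffunE _ i)) big_split /= -addn1; congr (_ + _)%N.
by rewrite (bigD1 j) //= eqxx big1 // => i /negbTE ->.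
Qed.

Lemma deg_decr a j : (0 < a j)%N -> deg a = (deg (decr a j)).+1.
Proof. by move=> h; rewrite -(deg_incr _ j) incr_decr. Qed.

Lemma xdot_deg P (k : int) : (forall b, (deg b)%:Z <> k -> P b = 0) ->
  forall a, (deg a)%:Z <> k + 1 -> xdot P a = 0.
Proof.
move=> H a ha; rewrite xdotE big1 // => j _; case: ifP => // h.
rewrite H ?iota0 // => e; apply: ha; by rewrite (deg_decr h) -addn1 PoszD e.
Qed.

Lemma dplus_deg P (k : int) : (forall b, (deg b)%:Z <> k -> P b = 0) ->
  forall a, (deg a)%:Z <> k - 1 -> dplus P a = 0.
Proof.
move=> H a ha; rewrite dplusE big1 // => j _.
rewrite H ?cscale0v ?eps0 // => e; apply: ha; move: e.
by rewrite deg_incr -addn1 PoszD => <-; rewrite addrK.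
Qed.

Lemma xdot_pscale c P a : xdot (pscale c P) a = cscale c (xdot P a).
Proof.
rewrite !xdotE cscale_sum; apply: eq_bigr => j _.
by case: ifP => _; rewrite ?cscale0v // iotaZ.
Qed.

Lemma dplus_pscale c P a : dplus (pscale c P) a = cscale c (dplus P a).
Proof.
rewrite !dplusE cscale_sum; apply: eq_bigr => j _.
by rewrite !epsZ !cscaleA mulrC.
Qed.

Lemma xdot0 a : xdot (fun _ => (0 : Cl F m)) a = 0.
Proof. rewrite xdotE big1 // => j _; by rewrite iota0 if_same. Qed.

End Grades.

Unset Implicit Arguments.

Theorem proposition1 (F : numFieldType) (m k s : nat) :
  (2 <= m)%N -> (s <= m)%N -> (1 <= s + k)%N ->
  [/\ (* both summands lie in P_k^s *)
      (forall Q : Pol F m, inKer k%:Z s Q -> inP k%:Z s Q),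
      (forall R : Pol F m, inKer (k%:Z - 1) s.+1 R -> inP k%:Z s (xdot R)),
      (* P_k^s is their sum *)
      (forall P : Pol F m, inP k%:Z s P ->
         exists Q R, [/\ inKer k%:Z s Q, inKer (k%:Z - 1) s.+1 R &
                         P = padd Q (xdot R)]),
      (* the sum is direct *)
      (forall Q R : Pol F m, inKer k%:Z s Q -> inKer (k%:Z - 1) s.+1 R ->
         Q = xdot R -> Q = (fun _ => 0)) &
      (* P^+ is the projection onto Ker_k^s along (x.)Ker_{k-1}^{s+1} *)
      (forall P : Pol F m, inP k%:Z s P ->
         inKer k%:Z s (Pplus s k P) /\
         exists R, inKer (k%:Z - 1) s.+1 R /\ psub P (Pplus s k P) = xdot R)].
Proof.
move=> hm hs hsk.
set c : F := - ((s + k)%:R)^-1.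
have hsk0 : ((s + k)%:R : F) != 0 by rewrite pnatr_eq0 -lt0n.
have inP_scale : forall (k' : int) s' (d : F) (R : Pol F m),
    inP k' s' R -> inP k' s' (pscale d R).
  move=> k' s' d R [H1 H2]; split => [a ha | a A hA]; rewrite /pscale.
    by rewrite H1 // cscale0v.
  by rewrite ffunE H2 // mulr0.
have HX : forall R : Pol F m, inP (k%:Z - 1) s.+1 R -> inP k%:Z s (xdot R).
  move=> R [H1 H2]; split.
    by move=> a ha; apply: (xdot_deg H1); rewrite subrK.
  move=> a A hA; apply: (xdot_gr H2) => e; apply: hA; by case: e.
have HD : forall P : Pol F m, inP k%:Z s P -> inP (k%:Z - 1) s.+1 (dplus P).
  move=> P [H1 H2]; split; first exact: (dplus_deg H1).
  apply: dplus_gr => b A hA; apply: H2 => e; apply: hA; by rewrite e.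
have HPP : forall P : Pol F m, inP k%:Z s P -> inP k%:Z s (Pplus s k P).
  move=> P [H1 H2]; rewrite /Pplus; apply: inP_scale; split.
    move=> a ha; apply: (dplus_deg (k := k%:Z + 1)); last by rewrite addrK.
    exact: xdot_deg H1.
  exact: (dplus_gr (xdot_gr H2)).
have HkerPP : forall P : Pol F m, inP k%:Z s P -> inKer k%:Z s (Pplus s k P).
  move=> P hP; split; first exact: HPP.
  apply: functional_extensionality => a.
  by rewrite /Pplus dplus_pscale dplus_dplus cscale0v.
have HR : forall P : Pol F m, inP k%:Z s P ->
    inKer (k%:Z - 1) s.+1 (pscale c (dplus P)).
  move=> P hP; split; first exact: inP_scale (HD _ hP).
  apply: functional_extensionality => a.
  by rewrite dplus_pscale dplus_dplus cscale0v.
have Hid : forall P : Pol F m, inP k%:Z s P -> forall a A,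
    P a A = c * ((dplus (xdot P) a) A + (xdot (dplus P) a) A).
  move=> P [H1 H2] a A.
  have -> : (dplus (xdot P) a) A + (xdot (dplus P) a) A =
            (dplus (xdot P) a + xdot (dplus P) a) A by rewrite ffunE.
  rewrite dx_xd_coord.
  case: (eqVneq (deg a)%:Z k%:Z) => [e|ne]; last first.
    by rewrite (H1 a (elimN eqP ne)) zeroE mulr0 oppr0 mulr0.
  case: (eqVneq #|A| s) => [eA|nA]; last first.
    by rewrite (H2 a A (elimN eqP nA)) mulr0 oppr0 mulr0.
  have ed : deg a = k by case: e.
  rewrite ed eA addnC /c mulrN mulNr opprK mulrA mulVf ?mul1r //.
have Hsub : forall P : Pol F m, inP k%:Z s P ->
    psub P (Pplus s k P) = xdot (pscale c (dplus P)).
  move=> P hP; apply: functional_extensionality => a; apply/ffunP => A.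
  rewrite /psub /Pplus xdot_pscale /pscale !ffunE (Hid P hP a A).
  by rewrite mulrDr addrAC subrr add0r.
split.
- by move=> Q [].
- move=> R [] hR _; exact: HX.
- move=> P hP; exists (Pplus s k P), (pscale c (dplus P)); split.
  + exact: HkerPP.
  + exact: HR.
  apply: functional_extensionality => a; apply/ffunP=> A; rewrite /padd ffunE.
  have := congr1 (fun f : Pol F m => f a A) (Hsub P hP).
  rewrite /psub !ffunE /= => <-; by rewrite addrC subrK.
- move=> Q R [hQ dQ] [[hR1 hR2] dR] e.
  have R0 : forall a A, R a A = 0.
    move=> a A; have := dx_xd_coord R a A.
    rewrite -e dQ dR /= xdot0 addr0 zeroE => /esym/eqP.
    rewrite oppr_eq0 mulf_eq0 pnatr_eq0 => /orP [|/eqP //].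
    rewrite addn_eq0 => /andP[_ /eqP hA]; apply: hR2; by rewrite hA.
  have R0f : R = (fun _ => 0).
    by apply: functional_extensionality => a; apply/ffunP => A; rewrite R0 zeroE.
  by apply: functional_extensionality => a; rewrite e R0f xdot0.
- move=> P hP; split; first exact: HkerPP.
  exists (pscale c (dplus P)); split; [exact: HR | exact: Hsub].
Qed.
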